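(* Let $G$ be a finite solvable group with $G\in\mathcal{D}_n$ for some integer $n\ge 3$. Then the derived length of $G$ is at most $n-1$.
   Context: $\mathcal{D}(G)$ denotes the number of conjugacy classes of nontrivial subgroups $H$ of the finite group $G$ with $N_G(H)\neq H$; $\mathcal{D}_n$ is the family of finite groups $G$ with $\mathcal{D}(G)=n$. *)

(* Defs.v *)
From mathcomp Require Import all_boot all_fingroup all_solvable.
Set Implicit Arguments. Unset Strict Implicit. Unset Printing Implicit Defensive.
Local Open Scope group_scope.

Definition nonselfnorm_subgroups (gT : finGroupType) (G : {set gT}) : {set {set gT}} :=
  [set H : {set gT} | [&& group_set H, H \subset G, H != 1 & 'N_G(H) != H]].

Definition Dcount (gT : finGroupType) (G : {set gT}) : nat :=
  #|[set H :^: G | H in nonselfnorm_subgroups G]|.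

(* Main.v *)
Require Import Defs.
From mathcomp Require Import all_boot all_fingroup all_solvable.
Local Open Scope group_scope.
Set Implicit Arguments. Unset Strict Implicit. Unset Printing Implicit Defensive.

Section Gen.
Variable gT : finGroupType.
Implicit Types G H K : {group gT}.

Lemma cls_eq_conj (G : {group gT}) (H K : {set gT}) :
  H :^: G = K :^: G -> exists2 g, g \in G & H = K :^ g.
Proof.
move=> E; have: H \in H :^: G by apply/imsetP; exists 1; rewrite ?group1 ?conjsg1.
by rewrite E => /imsetP[g Gg ->]; exists g.
Qed.

Lemma cls_eq_norm (G : {group gT}) (H K : {set gT}) :
  G \subset 'N(K) -> H :^: G = K :^: G -> H = K.
Proof.
move=> nKG /cls_eq_conj[g Gg ->]; exact: (normsP nKG).
Qed.

Lemma cls_eq_card (G : {group gT}) (H K : {set gT}) :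
  H :^: G = K :^: G -> #|H| = #|K|.
Proof. by move=> /cls_eq_conj[g _ ->]; rewrite cardJg. Qed.

Lemma good_of G H (K : {group gT}) :
  H \subset G -> H :!=: 1 -> K \subset G -> K \subset 'N(H) -> ~~ (K \subset H) ->
  (H : {set gT}) \in nonselfnorm_subgroups G.
Proof.
move=> sHG ntH sKG nHK nsKH; rewrite inE groupP sHG ntH /=.
apply: contra nsKH => /eqP <-; by rewrite subsetI sKG.
Qed.

Lemma Dcount_ge G m (F : nat -> {set gT}) :
  (forall i, i < m -> F i \in nonselfnorm_subgroups G) ->
  (forall i i', i < m -> i' < m -> F i :^: G = F i' :^: G -> i = i') ->
  m <= Dcount G.
Proof.
move=> Fg Fi; rewrite /Dcount.
have <-: #|[set F (val i) :^: G | i : 'I_m]| = m.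
  rewrite card_imset ?card_ord // => i i' E; apply: val_inj; exact: Fi (ltn_ord i) (ltn_ord i') E.
apply/subset_leq_card/subsetP => X /imsetP[i _ ->].
by apply: imset_f; apply: Fg (ltn_ord i).
Qed.

End Gen.


Section Der.
Variable gT : finGroupType.
Implicit Types G H K : {group gT}.

Lemma der_mono G i k : i <= k -> G^`(k) \subset G^`(i).
Proof.
move=> le_ik; rewrite -(subnKC le_ik); elim: (k - i) => [|t IH]; first by rewrite addn0.
by rewrite addnS (subset_trans (der_subS _ _) IH).
Qed.

Lemma der_proper G a b : solvable G -> G^`(a) :!=: 1 -> a < b -> G^`(b) \proper G^`(a).
Proof.
move=> solG nt lt_ab.
have pr: G^`(a.+1) \proper G^`(a).
  exact: (sol_der1_proper solG (der_sub a G) nt).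
exact: (sub_proper_trans (der_mono G lt_ab) pr).
Qed.

Lemma der_neq G a b : solvable G -> G^`(b) :!=: 1 -> a != b -> G^`(a) != G^`(b).
Proof.
move=> solG ntb; case: (ltngtP a b) => // [lt_ab|lt_ba] _.
- have ntA: G^`(a) :!=: 1.
    by apply: contraNneq ntb => Ea; rewrite -subG1 -Ea der_mono // ltnW.
  by rewrite eq_sym; apply: contraTneq (der_proper solG ntA lt_ab) => ->; rewrite properxx.
- by apply: contraTneq (der_proper solG ntb lt_ba) => ->; rewrite properxx.
Qed.

Lemma der_last G k t : G^`(k) :!=: 1 -> G^`(k + t) = 1 ->
  exists2 j, k <= j & G^`(j) :!=: 1 /\ G^`(j.+1) = 1.
Proof.
elim: t k => [|t IH] k nt E; first by rewrite addn0 in E; rewrite E eqxx in nt.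
have [E1|nt1] := eqVneq (G^`(k.+1)) 1; first by exists k.
have E' : G^`(k.+1 + t) = 1 by rewrite addSnnS.
have [j le_j Hj] := IH k.+1 nt1 E'.
by exists j => //; apply: ltnW.
Qed.

End Der.


Section H.
Variable gT : finGroupType.
Implicit Types G H K P : {group gT}.

Lemma sylow_good G K P q : K <| G -> K \proper G -> q.-Sylow(K) P -> P :!=: 1 ->
  (P : {set gT}) \in nonselfnorm_subgroups G.
Proof.
move=> nsKG prKG sylP ntP; have [sKG nKG] := andP nsKG.
have sPK := pHall_sub sylP.
apply: (good_of (K := 'N_G(P))) => //.
- exact: subset_trans sPK sKG.
- exact: subsetIl.
- exact: subsetIr.
apply: contraL prKG => sNP; have FA := Frattini_arg nsKG sylP.
apply/negP => /properP[_ [g Gg nKg]].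
move: Gg; rewrite -FA => /(subsetP (mul_subG (subxx K) (subset_trans sNP sPK))).
by rewrite (negbTE nKg).
Qed.

Lemma cent_cyclic_der1 G (A : {group gT}) : G \subset 'N(A) -> cyclic A -> G^`(1) \subset 'C(A).
Proof.
move=> nAG cycA; rewrite -ker_conj_aut ker_trivg_morphim (subset_trans (der_sub 1 G) nAG) /=.
rewrite morphim_der //.
have ab : abelian (conj_aut A @* G) by apply: abelianS (Aut_conj_aut A G) (Aut_cyclic_abelian cycA).
by move/derG1P: ab => ->.
Qed.

End H.

Section H2.
Variable gT : finGroupType.
Implicit Types G H K P X Y : {group gT}.

Lemma pg_prime X (p q : nat) : p.-group X -> prime q -> q %| #|X| -> q = p.
Proof. by move=> pX q_pr qX; have := pgroupP pX q q_pr qX; rewrite inE => /eqP. Qed.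

Lemma not_pgroup_prime X (p : nat) : ~~ p.-group X -> exists q, [/\ prime q, q %| #|X| & q != p].
Proof.
rewrite /pgroup /pnat cardG_gt0 /= => /allPn[q qX qp].
move: qX; rewrite mem_primes cardG_gt0 /= => /andP[q_pr qd].
by exists q; split => //; rewrite inE in qp.
Qed.

Lemma nil_join_proper X x : nilpotent X -> X^`(1) :!=: 1 -> x \in X ->
  ~~ (X \subset <[x]> <*> X^`(1)).
Proof.
move=> nilX ntX Xx; apply/negP => sXJ.
have sJX : <[x]> <*> X^`(1) \subset X by rewrite join_subG cycle_subG Xx der_sub.
have nDx : <[x]> \subset 'N(X^`(1)) by rewrite cycle_subG (subsetP (der_norm 1 X)).
have eJ : X :=: <[x]> * X^`(1).
  by rewrite -norm_joinEl //; apply/eqP; rewrite eqEsubset sXJ sJX.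
have eQ : X / X^`(1) = (<[x]> * X^`(1)) / X^`(1) by rewrite -eJ.
have cq : cyclic (X / X^`(1)) by rewrite eQ quotientMidr quotient_cyclic // cycle_cyclic.
have cX := cyclic_nilpotent_quo_der1_cyclic nilX cq.
by move/derG1P: (cyclic_abelian cX) => E; rewrite E eqxx in ntX.
Qed.

End H2.


Section Core.
Variable gT : finGroupType.
Implicit Types G H K P X Y L M A : {group gT}.

Definition avoid (L M A : {set gT}) (E : {set gT}) := [&& E != A, E != M & ~~ (L \subset E)].

Lemma core_abs G L M A :
  solvable G -> L <| G -> M <| G -> A <| G -> M :=: L^`(1) -> A :=: M^`(1) ->
  A :!=: 1 -> abelian A -> M \subset G^`(1) ->
  exists E1 E2 : {set gT},
   [/\ E1 \in nonselfnorm_subgroups G, E2 \in nonselfnorm_subgroups G,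
       avoid L M A E1, avoid L M A E2 & E1 :^: G != E2 :^: G].
Proof.
move=> solG nsLG nsMG nsAG defM defA ntA abA sMG1.
have [sLG nLG] := andP nsLG; have [sMG nMG] := andP nsMG; have [sAG nAG] := andP nsAG.
have ntG : G :!=: 1 by apply: contraNneq ntA => EG; rewrite -subG1 -EG.
have prG1 : G^`(1) \proper G := sol_der1_proper solG (subxx G) ntG.
have prMG : M \proper G := sub_proper_trans sMG1 prG1.
have sAM : A \subset M by rewrite defA der_sub.
have sML : M \subset L by rewrite defM der_sub.
have sAL := subset_trans sAM sML.
have ntM : M :!=: 1 by apply: contraNneq ntA => EM; rewrite -subG1 -EM.
have ntL : L :!=: 1 by apply: contraNneq ntM => EL; rewrite -subG1 -EL.
have prAM : A \proper M by rewrite defA; apply: sol_der1_proper (solvableS sMG solG) (subxx M) ntM.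
have prML : M \proper L by rewrite defM; apply: sol_der1_proper (solvableS sLG solG) (subxx L) ntL.
have nsAM : A <| M by rewrite defA der_normal.
have avA : forall E : {set gT}, ~~ (A \subset E) -> avoid L M A E.
  move=> E nAE; rewrite /avoid; apply/and3P; split.
  - by apply: contraNneq nAE => ->.
  - by apply: contraNneq nAE => ->.
  - by apply: contra nAE; apply: subset_trans.
have avM : forall E : {set gT}, E != A -> ~~ (M \subset E) -> avoid L M A E.
  move=> E nEA nME; rewrite /avoid nEA /=; apply/andP; split.
  - by apply: contraNneq nME => ->.
  - by apply: contra nME; apply: subset_trans.
pose p := pdiv #|A|.
have p_pr : prime p by apply: pdiv_prime; rewrite cardG_gt1.
have pA : p %| #|A| := pdiv_dvd _.
have pM : p %| #|M| := dvdn_trans pA (cardSg sAM).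
case: (boolP (p.-group M)) => [pgM | npM].
  have nilM := pgroup_nil pgM.
  have [_ [x Mx nAx]] := properP prAM.
  pose H := (<[x]> <*> A)%G.
  have sAH : A \subset H := joing_subr _ _.
  have xH : x \in H by rewrite (subsetP (joing_subl _ _)) ?cycle_id.
  have sHM : H \subset M by rewrite join_subG cycle_subG Mx sAM.
  have nsHM : H <| M by apply: sub_der1_normal => //; rewrite -defA.
  have nMH : ~~ (M \subset H).
    have ntM1 : M^`(1) :!=: 1 by rewrite -defA.
    have := nil_join_proper nilM ntM1 Mx.
    by rewrite -defA.
  have ntH : H :!=: 1 by apply: contraNneq ntA => EH; rewrite -subG1 -EH.
  have gH : (H : {set gT}) \in nonselfnorm_subgroups G.
    apply: (good_of (K := M)) => //; first exact: subset_trans sHM sMG.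
    exact: normal_norm nsHM.
  have nHA : (H : {set gT}) != A by apply: contraNneq nAx => <-.
  have avH : avoid L M A H by apply: avM.
  have oAp : forall B : {group gT}, A \subset B -> #|B| = p -> #|A| = p.
    move=> B sAB oB; have prB : prime #|B| by rewrite oB.
    have nt1 : #|A| != 1%N by rewrite -(cardG_gt1 A) in ntA; rewrite neq_ltn ntA orbT.
    by move/(prime_nt_dvdP prB nt1): (cardSg sAB) => ->.
  case: (boolP [exists b in M, (#[b] == p) && (<[b]> != A :> {set gT})]) => [|none].
    case/exists_inP => b Mb /andP[/eqP ob nbA].
    have nMB : ~~ (M \subset <[b]>).
      apply/negP => sMB; have sAB := subset_trans sAM sMB.
      have oA := oAp _ sAB ob.
      case/eqP: nbA; apply/esym/eqP; rewrite eqEcard sAB /= oA -ob orderE //.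
    have prB : <[b]> \proper M by rewrite properE cycle_subG Mb.
    exists (H : {set gT}), (<[b]> : {set gT}); split => //.
    - have := nilpotent_proper_norm nilM prB; rewrite properE => /andP[_ nNB].
      apply: (good_of (K := 'N_M(<[b]>))) => //.
      + by rewrite cycle_subG (subsetP sMG).
      + by rewrite -cardG_gt1 -orderE ob prime_gt1.
      + exact: subset_trans (subsetIl _ _) sMG.
      + exact: subsetIr.
    - exact: avM.
    apply/negP => /eqP /cls_eq_card; rewrite -orderE ob => oH.
    have oA := oAp _ sAH oH.
    case/eqP: nHA; apply/esym/eqP; rewrite eqEcard sAH /= oA oH //.
  have noneP : forall b, b \in M -> #[b] = p -> <[b]> = A :> {set gT}.
    move=> b Mb ob; apply/eqP; apply: contraNT none => nb; apply/exists_inP.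
    by exists b => //; rewrite ob eqxx.
  have [a Aa oa] := Cauchy p_pr pA.
  have oA : #|A| = p by rewrite -(noneP a) ?(subsetP sAM) // -orderE.
  case: (eqVneq p 2) => [p2 | p_odd].
    have cAG : G \subset 'C(A).
      apply/subsetP => g Gg; apply/centP => y Ay.
      have Ayg : y ^ g \in A by rewrite memJ_norm // (subsetP nAG).
      have [-> | nty] := eqVneq y 1; first exact: commute1.
      have c1 : #|A :\ 1| <= 1.
        move: (cardsD1 1 A); rewrite group1 oA p2 => E2.
        by rewrite -(leq_add2l 1) -E2.
      have nyg : y ^ g != 1 by rewrite conjg_eq1.
      move/card_le1_eqP: c1 => c1.
      have E : y ^ g = y by apply: c1; rewrite !inE ?nyg ?nty ?Ayg ?Ay.
      by apply/commute_sym/commgP/conjg_fixP.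
    have pH : p %| #|H| := dvdn_trans pA (cardSg sAH).
    have prHM : H \proper M by rewrite properE sHM.
    case: (boolP (p.-group L)) => [pgL | npL].
      have nilL := pgroup_nil pgL.
      have [_ [y Ly nMy]] := properP prML.
      pose E := (<[y]> <*> M)%G.
      have sME : M \subset E := joing_subr _ _.
      have yE : y \in E by rewrite (subsetP (joing_subl _ _)) ?cycle_id.
      have sEL : E \subset L by rewrite join_subG cycle_subG Ly sML.
      have nsEL : E <| L by apply: sub_der1_normal => //; rewrite -defM.
      have nLE : ~~ (L \subset E).
        have ntL1 : L^`(1) :!=: 1 by rewrite -defM.
        have := nil_join_proper nilL ntL1 Ly.
        by rewrite -defM.
      exists (H : {set gT}), (E : {set gT}); split => //.
      - apply: (good_of (K := L)) => //.
        + exact: subset_trans sEL sLG.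
        + by apply: contraNneq ntM => EE; rewrite -subG1 -EE.
        + exact: normal_norm nsEL.
      - rewrite /avoid nLE andbT; apply/andP; split.
          by apply: contraNneq nMy => EA; rewrite (subsetP sAM) // -EA.
        by apply: contraNneq nMy => EM; rewrite -EM.
      apply/negP => /eqP /cls_eq_card cHE.
      have := proper_card prHM; rewrite cHE ltnNge.
      by rewrite subset_leq_card.
    have [r [r_pr rL rp]] := not_pgroup_prime npL.
    have [y Ly oy] := Cauchy r_pr rL.
    have sYG : <[y]> \subset G by rewrite cycle_subG (subsetP sLG).
    have nAY : ~~ (A \subset <[y]>).
      apply/negP => sAY; move: (dvdn_trans pA (cardSg sAY)).
      by rewrite -orderE oy dvdn_prime2 // eq_sym (negbTE rp).
    exists (H : {set gT}), (<[y]> : {set gT}); split => //.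
    - apply: (good_of (K := A)) => //.
      + by rewrite -cardG_gt1 -orderE oy prime_gt1.
      + by rewrite cents_norm // centsC (subset_trans sYG cAG).
    - exact: avA.
    apply/negP => /eqP /cls_eq_card; rewrite -orderE oy => cH.
    by move: pH; rewrite cH dvdn_prime2 // eq_sym (negbTE rp).
  exfalso.
  have rk : 'r_p(M) <= 1.
    rewrite leqNgt; apply/negP => /p_rank_geP[E Ep2].
    have oE := card_pnElem Ep2; have [sEM abE _] := pnElemP Ep2.
    have ntE : E :!=: 1.
      by rewrite -cardG_gt1 oE (ltn_trans (prime_gt1 p_pr)) // -{1}(expn1 p) ltn_exp2l ?prime_gt1.
    have [e1 Ee1 nte1] := trivgPn _ ntE.
    have o1 := abelem_order_p abE Ee1 nte1.
    have prE1 : <[e1]> \proper E.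
      rewrite properE cycle_subG Ee1 /=; apply/negP => /subset_leq_card.
      by rewrite -orderE o1 oE leqNgt -{1}(expn1 p) ltn_exp2l ?prime_gt1.
    have [_ [e2 Ee2 ne2]] := properP prE1.
    have nte2 : e2 != 1 by apply: contraNneq ne2 => ->; rewrite group1.
    have o2 := abelem_order_p abE Ee2 nte2.
    have E1 := noneP e1 (subsetP sEM e1 Ee1) o1.
    have E2 := noneP e2 (subsetP sEM e2 Ee2) o2.
    by move: ne2; rewrite E1 -E2 cycle_id.
  have oddM : odd #|M|.
    rewrite -[odd _]negbK -dvdn2; apply/negP => d2.
    by move: p_odd; rewrite (pg_prime pgM (isT : prime 2) d2) eqxx.
  have cycM : cyclic M by rewrite (odd_pgroup_rank1_cyclic pgM oddM).
  move/derG1P: (cyclic_abelian cycM) => E.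
  by rewrite defA E eqxx in ntA.
have [q [q_pr qM qp]] := not_pgroup_prime npM.
have [Q sylQ] := Sylow_exists q M.
have qQ : q.-group Q := pHall_pgroup sylQ.
have sQM := pHall_sub sylQ.
have ntQ : Q :!=: 1.
  rewrite -cardG_gt1 (card_Hall sylQ) p_part_gt1 mem_primes q_pr cardG_gt0 qM //.
have gQ := sylow_good nsMG prMG sylQ ntQ.
have nAQ : ~~ (A \subset Q).
  apply/negP => sAQ; have := pg_prime qQ p_pr (dvdn_trans pA (cardSg sAQ)).
  by move=> E; rewrite E eqxx in qp.
have [P sylP] := Sylow_exists p M.
have pP : p.-group P := pHall_pgroup sylP.
have sPM := pHall_sub sylP.
have ntP : P :!=: 1.
  rewrite -cardG_gt1 (card_Hall sylP) p_part_gt1 mem_primes p_pr cardG_gt0 pM //.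
case: (eqVneq (P : {set gT}) A) => [PA | nPA]; last first.
  exists (Q : {set gT}), (P : {set gT}); split => //.
  - exact: sylow_good nsMG prMG sylP ntP.
  - exact: avA.
  - apply: avM => //; apply/negP => sMP.
    have := pg_prime pP q_pr (dvdn_trans qM (cardSg sMP)).
    by move=> E; rewrite E eqxx in qp.
  apply/negP => /eqP /cls_eq_card cQP.
  have [_ qdQ _] := pgroup_pdiv qQ ntQ.
  have := pg_prime pP q_pr; rewrite -cQP => /(_ qdQ) E.
  by rewrite E eqxx in qp.
case: (eqVneq #|A| p) => [oA | noA].
  exfalso.
  have cycA : cyclic A by apply: prime_cyclic; rewrite oA.
  have cMA : M \subset 'C(A) := subset_trans sMG1 (cent_cyclic_der1 nAG cycA).
  have hallA : Hall M A by rewrite -PA; exact: pHall_Hall sylP.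
  have [K /complP[tiAK defMK]] := splitsP (SchurZassenhaus_split hallA nsAM).
  have sKM : K \subset M by rewrite -defMK mulG_subr.
  have nKM : M \subset 'N(K).
    by rewrite -defMK mul_subG ?normG // cents_norm // centsC (subset_trans sKM cMA).
  have abMK : abelian (M / K) by rewrite -defMK quotientMidr quotient_abelian.
  have sAK : A \subset K by rewrite defA; apply: der1_min.
  by move: tiAK; rewrite (setIidPl sAK) => E; rewrite E eqxx in ntA.
have [a Aa oa] := Cauchy p_pr pA.
have sBA : <[a]> \subset A by rewrite cycle_subG.
have nAB : ~~ (A \subset <[a]>).
  apply/negP => sAB; case/eqP: noA; rewrite -oa orderE.
  by apply/eqP; rewrite eqn_leq (subset_leq_card sAB) (subset_leq_card sBA).
exists (Q : {set gT}), (<[a]> : {set gT}); split => //.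
- apply: (good_of (K := A)) => //.
  + exact: subset_trans sBA sAG.
  + by rewrite -cardG_gt1 -orderE oa prime_gt1.
  + by rewrite cents_norm // centsC (subset_trans sBA abA).
- exact: avA.
- exact: avA.
apply/negP => /eqP /cls_eq_card; rewrite -orderE oa => cQ.
have [_ qdQ _] := pgroup_pdiv qQ ntQ.
move: qdQ; rewrite cQ dvdn_prime2 // => E.
by rewrite E in qp.
Qed.

End Core.


Lemma avoid_der (gT : finGroupType) (G : {group gT}) j (E : {set gT}) :
  avoid (G^`(j)) (G^`(j.+1)) (G^`(j.+2)) E -> forall i, 0 < i <= j.+2 -> E != G^`(i).
Proof.
case/and3P=> nA nM nL i /andP[_ le_i].
rewrite leq_eqVlt in le_i; case/orP: le_i => [/eqP -> //|]; rewrite ltnS leq_eqVlt.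
case/orP => [/eqP -> //|]; rewrite ltnS => le_ij.
by apply: contraNneq nL => ->; apply: der_mono.
Qed.

Lemma core (gT : finGroupType) (G : {group gT}) j : solvable G -> G^`(j.+2) :!=: 1 -> G^`(j.+3) = 1 ->
  exists E1 E2 : {set gT},
   [/\ E1 \in nonselfnorm_subgroups G, E2 \in nonselfnorm_subgroups G,
       (forall i, 0 < i <= j.+2 -> E1 != G^`(i)),
       (forall i, 0 < i <= j.+2 -> E2 != G^`(i)) &
       E1 :^: G != E2 :^: G].
Proof.
move=> solG ntA EA.
have abA : abelian (G^`(j.+2)) by apply/derG1P.
have sMG1 : G^`(j.+1) \subset G^`(1) by apply: der_mono.
have [E1 [E2 [g1 g2 a1 a2 n12]]] :=
  core_abs solG (der_normal j G) (der_normal j.+1 G) (der_normal j.+2 G) (erefl _) (erefl _) ntA abA sMG1.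
by exists E1, E2; split => //; apply: avoid_der.
Qed.

Lemma der_good (gT : finGroupType) (G : {group gT}) i : solvable G -> 0 < i -> G^`(i) :!=: 1 ->
  (G^`(i) : {set gT}) \in nonselfnorm_subgroups G.
Proof.
move=> solG i_gt0 nt.
have ntG : G :!=: 1 by apply: contraNneq nt => EG; rewrite -subG1 -EG der_sub.
have prG := sol_der1_proper solG (subxx G) ntG.
apply: (good_of (K := G)) => //; first exact: der_sub.
  exact: der_norm.
apply: contraL prG => sGGi; rewrite properE negb_and; apply/orP; right.
by rewrite negbK (subset_trans sGGi) // (der_mono G i_gt0).
Qed.

Theorem mainTheorem17 (gT : finGroupType) (G : {group gT}) (n : nat) :
  solvable G -> (3 <= n)%N -> Dcount G = n -> G^`(n.-1) = 1.
Proof.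
move=> solG n_ge3 Dn; apply/eqP; apply: contraT => nt.
have [N GN1] := derivedP _ solG.
have EN : G^`(n.-1 + N) = 1 by apply/trivgP; rewrite -GN1 der_mono // leq_addl.
have [j' le_j' [ntj' Ej']] := der_last nt EN.
have j'_ge2 : 2 <= j' by apply: leq_trans le_j'; rewrite -ltnS prednK // (leq_trans _ n_ge3).
pose j := j' - 2.
have ej : j' = j.+2 by rewrite /j -addn2 subnK.
rewrite ej in ntj' Ej' le_j'.
have [E1 [E2 [gE1 gE2 nE1 nE2 E12]]] := core solG ntj' Ej'.
pose F i := if i < j.+2 then (G^`(i.+1) : {set gT}) else if i == j.+2 then E1 else E2.
have nF : forall i, i < j.+2 -> F i = G^`(i.+1) by move=> i lt; rewrite /F lt.
have cls_der : forall (X : {set gT}) i, X :^: G = G^`(i) :^: G -> X = G^`(i).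
  by move=> X i; apply: cls_eq_norm; apply: der_norm.
have : j.+4 <= Dcount G.
  apply: (Dcount_ge (F := F)).
    move=> i lti; rewrite /F; case: ltnP => hi.
      apply: der_good => //; apply: contraNneq ntj' => Ei.
      by rewrite -subG1 -Ei der_mono.
    by case: eqP.
  have side : forall X i, i < j.+2 -> X \in [:: E1; E2] -> X :^: G != G^`(i.+1) :^: G.
    move=> X i hi; rewrite !inE => /orP[] /eqP ->; apply: (contra_neq (cls_der _ i.+1)).
      by apply: nE1; rewrite hi.
    by apply: nE2; rewrite hi.
  have hiE : forall i, j.+2 <= i -> i < j.+4 -> F i \in [:: E1; E2].
    by move=> i h1 h2; rewrite /F ltnNge h1 /=; case: eqP; rewrite !inE eqxx ?orbT.
  move=> i i' lti lti' E.
  case: (ltnP i j.+2) => hi; case: (ltnP i' j.+2) => hi'.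
  - rewrite !nF // in E; move/cls_der: E => /eqP; apply: contraTeq => ne.
    apply: der_neq => //.
    apply: contraNneq ntj' => Ei.
    by rewrite -subG1 -Ei der_mono.
  - by rewrite nF // in E; case/eqP: (side _ _ hi (hiE _ hi' lti')); rewrite E.
  - by rewrite (nF i') // in E; case/eqP: (side _ _ hi' (hiE _ hi lti)); rewrite E.
  - move: E; rewrite /F ltnNge hi ltnNge hi' /=.
    have : (i == j.+2) || (i == j.+3).
      by rewrite leq_eqVlt in hi; case/orP: hi => [/eqP<-|]; rewrite ?eqxx // => h; apply/orP; right; rewrite eqn_leq h andbT -ltnS lti.
    have : (i' == j.+2) || (i' == j.+3).
      by rewrite leq_eqVlt in hi'; case/orP: hi' => [/eqP<-|]; rewrite ?eqxx // => h; apply/orP; right; rewrite eqn_leq h andbT -ltnS lti'.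
    by case/orP=> /eqP-> ; case/orP=> /eqP->; rewrite ?eqxx ?(ltn_eqF (ltnSn _)) ?(gtn_eqF (ltnSn _)) // => E; case/eqP: E12; rewrite ?E.
rewrite Dn; move: le_j' n_ge3; case: n {Dn nt EN} => // n; rewrite /= => le1 _ le2.
by rewrite ltnS in le2; move: (leq_trans le2 le1); rewrite ltnn.
Qed.
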